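(* Let $G$ be a finite GVZ-group with $|\mathrm{cd}(G)|=2$, and let $\phi,\chi\in\mathrm{nl}(G)$. If $[Z(\phi),G]\subseteq\ker\chi$, then $Z(\phi)=Z(\chi)$.
   Context: All groups are finite. $\mathrm{Irr}(G)$ is the set of complex irreducible characters of $G$, $\mathrm{nl}(G)$ the set of non-linear irreducible characters, and $\mathrm{cd}(G)=\{\chi(1):\chi\in\mathrm{Irr}(G)\}$. For a character $\chi$, $Z(\chi)=\{g\in G: |\chi(g)|=\chi(1)\}$. A nonabelian group $G$ is a GVZ-group if for every $\chi\in\mathrm{Irr}(G)$ we have $\chi(g)=0$ for all $g\in G\setminus Z(\chi)$. *)

(* Defs.v *)
From mathcomp Require Import all_boot all_order all_algebra all_fingroup all_solvable all_field all_character.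
Set Implicit Arguments. Unset Strict Implicit. Unset Printing Implicit Defensive.
Import GroupScope GRing.Theory Num.Theory.
Local Open Scope ring_scope.

Definition cd (gT : finGroupType) (G : {group gT}) : seq algC :=
  undup [seq 'chi[G]_i 1%g | i <- enum (Iirr G)].

Definition GVZ (gT : finGroupType) (G : {group gT}) : Prop :=
  ~~ abelian G /\
  forall (i : Iirr G) (g : gT), g \in G -> g \notin ('Z('chi[G]_i))%CF -> 'chi[G]_i g = 0.

(* Main.v *)
Require Import Defs.
From mathcomp Require Import all_boot all_order all_algebra all_fingroup all_solvable all_field all_character.
Import GroupScope GRing.Theory Num.Theory.
Local Open Scope ring_scope.

Lemma two_elems (T : eqType) (s : seq T) (a b o : T) :
  size s = 2%N -> uniq s -> a \in s -> b \in s -> o \in s -> a != o -> b != o -> a = b.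
Proof.
case: s => [|x [|y []]] //= _.
rewrite !inE andbT => xy.
move=> /orP[]/eqP-> /orP[]/eqP-> /orP[]/eqP-> //; rewrite ?eqxx //.
Qed.

Lemma cfcenter_sub_comm (gT : finGroupType) (G : {group gT}) (c : Iirr G) (A : {group gT}) :
  A \subset G -> [~: A, G] \subset cfker 'chi[G]_c -> A \subset ('Z('chi[G]_c))%CF.
Proof.
move=> sAG sK; apply/subsetP=> x Ax.
have Gx := subsetP sAG x Ax.
have nKx := subsetP (normal_norm (cfker_normal 'chi[G]_c)) _ Gx.
rewrite -(quotientGK (cfker_center_normal 'chi[G]_c)) inE nKx inE /=.
rewrite cfcenter_eq_center inE mem_quotient //=.
apply/centP=> _ /morphimP[y nKy Gy ->]; apply/commgP; rewrite -morphR //=.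
rewrite coset_id //; apply: (subsetP sK); exact: mem_commg.
Qed.

Lemma gvz_deg (gT : finGroupType) (G : {group gT}) (i : Iirr G) :
  GVZ G -> ('chi[G]_i 1%g) ^+ 2 = #|G : 'Z('chi[G]_i)%CF|%:R.
Proof.
move=> [_ HV]; apply/eqP; rewrite irr1_bound cfun_onE; apply/subsetP=> x.
rewrite !inE => nz; apply: contraR nz => nZ.
have [Gx | nGx] := boolP (x \in G); first by rewrite HV.
by rewrite cfun0.
Qed.

Theorem mainTheorem6 (gT : finGroupType) (G : {group gT}) (p c : Iirr G) :
  GVZ G -> size (cd G) = 2%N ->
  ~~ ('chi[G]_p \is a linear_char) -> ~~ ('chi[G]_c \is a linear_char) ->
  [~: ('Z('chi[G]_p))%CF, G] \subset cfker 'chi[G]_c ->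
  ('Z('chi[G]_p))%CF = ('Z('chi[G]_c))%CF.
Proof.
move=> gvz hcd lp lc hK.
have sub := @cfcenter_sub_comm _ G c _ (cfcenter_sub 'chi[G]_p) hK.
have mem i : 'chi[G]_i 1%g \in cd G.
  by rewrite mem_undup; apply/mapP; exists i; rewrite ?mem_enum.
have lin i : ~~ ('chi[G]_i \is a linear_char) -> 'chi[G]_i 1%g != 1.
  by apply: contra => h; rewrite qualifE/= irr_char.
have e1 : 'chi[G]_p 1%g = 'chi[G]_c 1%g.
  apply: (@two_elems _ _ _ _ _ hcd (undup_uniq _) (mem p) (mem c) (mem 0)); 
    by rewrite irr0 cfun11 lin.
have ei : #|G : 'Z('chi[G]_p)%CF| = #|G : 'Z('chi[G]_c)%CF|.
  by apply/eqP; rewrite -(eqr_nat algC) -!gvz_deg // e1.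
apply/eqP; rewrite eqEcard sub /=.
have := Lagrange (cfcenter_sub 'chi[G]_p); rewrite -(Lagrange (cfcenter_sub 'chi[G]_c)) ei.
by move/eqP; rewrite eqn_pmul2r ?indexg_gt0 // => /eqP->.
Qed.
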